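(* Assume the standing hypotheses (H). There is $K_3\in L^4_{\mathfrak P}$ such that for every $(t,\mathbf x)\in\mathbf D$ and $\boldsymbol\zeta\in\mathbf Z$, $$|H_3(t,\mathbf x;\boldsymbol\zeta)-H_3(t,\mathbf x;\boldsymbol\zeta^0(\Sigma))|\le K_3(t,\mathbf x)\|\boldsymbol\zeta-\boldsymbol\zeta^0(\Sigma)\|\max\big(1,\|\boldsymbol\zeta-\boldsymbol\zeta^0(\Sigma)\|\big).$$
   Context: Setting. Fix $T>0$, $S_0>0$, $\Sigma_0>0$, $A_0\in\mathbb R$. $\Omega$: continuous paths $\omega=(\omega^S,\omega^\Sigma,\omega^A):[0,T]\to\mathbb R^3$ with $\omega_0=(S_0,\Sigma_0,A_0)$ (uniform topology, Borel $\sigma$-algebra $\mathcal F$); $S,\Sigma,A$ coordinate processes, $\mathbb F$ their raw filtration, $M_t=\sup_{u\le t}S_u$, $\mathbf X_t=(S_t,A_t,M_t,\Sigma_t)$. $\mathbf G=\mathbb R_+\times\mathbb R\times\mathbb R_+$, $\mathbf D^0=(0,T)\times\mathbf G\times\mathbb R_+$ (points $(t,\mathbf x)$, $\mathbf x=(S,A,M,\Sigma)$); $0<\underline\Sigma<\Sigma_0<\overline\Sigma$, $\mathbf D=(0,T)\times\mathbf G\times[\underline\Sigma,\overline\Sigma]$. $\|\cdot\|$ Euclidean norm, $\mathbf e_4$ fourth unit vector, $x^-=\max(-x,0)$. Call: $\mathcal C(t,S,\Sigma)$ with $\mathcal C_t+\frac12\Sigma^2S^2\mathcal C_{SS}=0$,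 $\mathcal C(T_{\mathsf C},S,\Sigma)=\mathsf C(S)$. $b^{\mathcal C}(t,\mathbf x;\boldsymbol\zeta)=\nu\mathcal C_\Sigma+\frac12S^2\mathcal C_{SS}(\sigma^2-\Sigma^2)+\sigma\eta S\mathcal C_{S\Sigma}+\frac12(\eta^2+\xi)\mathcal C_{\Sigma\Sigma}$ for $\boldsymbol\zeta=(\nu,\sigma,\eta,\xi)$. Models: $\mathfrak P^{00}$ = probability measures $P$ on $(\Omega,\mathcal F)$ with progressively measurable $\boldsymbol\zeta^P=(\nu^P,\sigma^P,\eta^P,\xi^P)$ such that $S$, $\Sigma-\int_0^\cdot\nu^P_tdt$ are continuous local $P$-martingales with $d\langle S\rangle_t=S_t^2(\sigma^P_t)^2dt$, $d\langle\Sigma\rangle_t=((\eta^P_t)^2+\xi^P_t)dt$, $d\langle S,\Sigma\rangle_t=S_t\sigma^P_t\eta^P_tdt$, $S,\Sigma>0$, $\xi^P\ge0$, $b^{\mathcal C}(t,\mathbf X_t;\boldsymbol\zeta^P_t)=0$ $dt\times P$-a.e.; for Borel $\alpha,\beta,\gamma,\delta:[0,T]\times\mathbb R^3\to\mathbb R$, $\mathfrak P^0$ = those $P$ with $dA_t=(\alpha+\frac12(\sigma^P_t)^2\beta)dt+\gamma dS_t+\delta dM_t$. $\boldsymbol\zeta^0(\Sigma)=(0,\Sigma,0,0)^\top$; reference model: $\boldsymbol\zeta^P_t=\boldsymbol\zeta^0(\Sigma_t)$ a.e. Non-traded option: $\mathcal V(\cdot,\Sigma)$ solves $\mathcal V_t+(\alpha+\frac12\beta\Sigma^2)\mathcal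 V_A+\frac12\Sigma^2S^2(\mathcal V_{SS}+2\gamma\mathcal V_{SA}+\gamma^2\mathcal V_{AA})=0$ on $(0,T)\times\mathbf G$, $\delta\mathcal V_A+\mathcal V_M=0$ on $\{S\ge M\}$, $\mathcal V(T,\cdot,\Sigma)=\mathsf V$. $\Delta=\mathcal V_S+\gamma\mathcal V_A$, $\Gamma=\mathcal V_{SS}+2\gamma\mathcal V_{SA}+\gamma^2\mathcal V_{AA}$, $\frac{\partial\Delta}{\partial\Sigma}:=\mathcal V_{S\Sigma}+\gamma\mathcal V_{A\Sigma}$. P&L: $V_t=\mathcal V(t,\mathbf X_t)$, $C_t=\mathcal C(t,S_t,\Sigma_t)$; strategies $\boldsymbol\upsilon=(\theta,\phi)$ real locally bounded progressive; $Y^{\boldsymbol\upsilon,P}_t=Y_0+V_0+\int_0^t\theta dS+\int_0^t\phi dC-V_t$. Preferences: $\Psi=\mathrm{diag}(\psi_\nu,\psi_\sigma,\psi_\eta,\psi_\xi)$, positive; a utility $U$, strategy set $\mathfrak Y$, model set $\mathfrak P\subset\mathfrak P^0$. Candidate control: $\mathbf c=(\mathcal C_\Sigma,\Sigma S^2\mathcal C_{SS},\Sigma S\mathcal C_{S\Sigma},\frac12\mathcal C_{\Sigma\Sigma})^\top$, $\mathbf v=(\mathcal V_\Sigma,\Sigma(\beta\mathcal V_A+S^2\Gamma),\Sigma S\frac{\partial\Delta}{\partial\Sigma},\frac12\mathcal V_{\Sigma\Sigma})^\top$; $\lambda=\frac{\mathbf c^\top\Psi\mathbf v}{\mathbf c^\top\Psi\mathbf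 c}$ if $\mathcal V_{\Sigma\Sigma}-\frac{\mathbf c^\top\Psi\mathbf v}{\mathbf c^\top\Psi\mathbf c}\mathcal C_{\Sigma\Sigma}\ge0$, else $\lambda=\frac{\mathbf c^\top\Psi\mathbf v-\frac14\mathcal C_{\Sigma\Sigma}\mathcal V_{\Sigma\Sigma}\psi_\xi}{\mathbf c^\top\Psi\mathbf c-\frac14\mathcal C_{\Sigma\Sigma}^2\psi_\xi}$; $\mu=\frac12(\mathcal V_{\Sigma\Sigma}-\lambda\mathcal C_{\Sigma\Sigma})^-$; $\widetilde{\boldsymbol\zeta}=\Psi(\mathbf v-\lambda\mathbf c+\mu\mathbf e_4)$; $\boldsymbol\zeta^\psi=\boldsymbol\zeta^0(\Sigma)+\widetilde{\boldsymbol\zeta}\mathbf 1_{\{\underline\Sigma<\Sigma<\overline\Sigma\}}\psi$; $\widetilde g=\mathbf v^\top\widetilde{\boldsymbol\zeta}$. Cash-equivalent PDE: for $\Sigma\in[\underline\Sigma,\overline\Sigma]$, $\widetilde w_t+(\alpha+\frac12\beta\Sigma^2)\widetilde w_A+\frac12\Sigma^2S^2(\widetilde w_{SS}+2\gamma\widetilde w_{SA}+\gamma^2\widetilde w_{AA})+\frac12\widetilde g(\cdot,\Sigma)=0$ on $(0,T)\times\mathbf G$, $\delta\widetilde w_A+\widetilde w_M=0$ on $\{S\ge M\}$, $\widetilde w(T,\cdot,\Sigma)=0$. $L^p_{\mathfrak P}$: Borel $K$ on $\mathbf D^0$ with $\sup_{P\in\mathfrak P}E^P[\int_0^T|K(t,\mathbf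 X_t)|^pdt]^{1/p}<\infty$. Candidate asymptotic model family: $(P^\psi)_{\psi\in(0,\psi_0)}\subset\mathfrak P$, $\psi_0\in(0,1)$, with $K_0\in L^4_{\mathfrak P}$ and $\|\boldsymbol\zeta^{P^\psi}_t-\boldsymbol\zeta^\psi(t,\mathbf X_t)\|\le K_0(t,\mathbf X_t)\psi^2$ $dt\times P^\psi$-a.e. Assumption (A): (a) $\exists K_{\mathfrak Y}$: $Y^{\boldsymbol\upsilon,P}>-K_{\mathfrak Y}$ $dt\times P$-a.e. for all $\boldsymbol\upsilon\in\mathfrak Y$, $P\in\mathfrak P$; (b) $\mathfrak P$ contains a candidate asymptotic model family and a reference model, and constants $\underline\nu<0<\overline\nu$, $0<\underline\sigma<\underline\Sigma$, $\overline\Sigma<\overline\sigma$, $\underline\eta<0<\overline\eta$, $\overline\xi>0$ bound $\nu^P,\sigma^P,\eta^P,\xi^P,\Sigma$ in $[\underline\nu,\overline\nu],[\underline\sigma,\overline\sigma],[\underline\eta,\overline\eta],[0,\overline\xi],[\underline\Sigma,\overline\Sigma]$ $dt\times P$-a.e. for all $P\in\mathfrak P$; (c) $T_{\mathsf C}\ge T$, $\mathcal C\in C^{1,2,2}((0,T_{\mathsf C})\times\mathbb R_+^2)\cap C([0,T_{\mathsf C}]\times\overline{\mathbb R}_+^2)$ solves the call PDE classically for $\Sigma\in[\underline\Sigma,\overline\Sigma]$, $\mathcal C_\Sigma\ne0$ and $|\mathcal C_{\Sigma\Sigma}|\le K_{\mathcal C}(|\mathcal C_\Sigma|+|S^2\mathcal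 C_{SS}|+|S\mathcal C_{S\Sigma}|)$ on $(0,T)\times\mathbb R_+\times[\underline\Sigma,\overline\Sigma]$ with $K_{\mathcal C}\in L^2_{\mathfrak P}$; (d) $\mathcal V\in C^{1,2,2,1,2}(\mathbf D^0)\cap C(\overline{\mathbf D^0})$ solves the $\mathcal V$-PDE classically for $\Sigma\in[\underline\Sigma,\overline\Sigma]$, $|\mathcal V_\Sigma|,|\beta\mathcal V_A+S^2\Gamma|,|S\frac{\partial\Delta}{\partial\Sigma}|,|\mathcal V_{\Sigma\Sigma}|\le K_{\mathcal V}$ on $\mathbf D$; (e) $\widetilde w\in C^{1,2,2,1,2}(\mathbf D^0)\cap C(\overline{\mathbf D^0})$ solves the cash-equivalent PDE classically for $\Sigma\in[\underline\Sigma,\overline\Sigma]$, $0\le\widetilde w\le K_{\widetilde w}$ on $\mathbf D$, and $\widetilde w_\Sigma,S(\widetilde w_S+\gamma\widetilde w_A),\beta\widetilde w_A+S^2(\widetilde w_{SS}+2\gamma\widetilde w_{SA}+\gamma^2\widetilde w_{AA}),S(\widetilde w_{S\Sigma}+\gamma\widetilde w_{A\Sigma}),\widetilde w_{\Sigma\Sigma}\in L^4_{\mathfrak P}$; (f) $U\in C^3(\mathbb R)$, $U'>0$, $U''<0$, $-U''/U'$ nonincreasing. Additional notation. $\mathbf Z=[\underline\nu,\overline\nu]\times[\underline\sigma,\overline\sigma]\times[\underline\eta,\overline\eta]\times[0,\overline\xi]$. $H_3(t,\mathbf x;\boldsymbol\zeta)=\nu\widetilde w_\Sigma+(\alpha+\frac12\beta\sigma^2)\widetilde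 w_A+\frac12\sigma^2S^2(\widetilde w_{SS}+2\gamma\widetilde w_{SA}+\gamma^2\widetilde w_{AA})+\sigma\eta S(\widetilde w_{S\Sigma}+\gamma\widetilde w_{A\Sigma})+\frac12(\eta^2+\xi)\widetilde w_{\Sigma\Sigma}$ for $\boldsymbol\zeta=(\nu,\sigma,\eta,\xi)$. Delta-vega hedge $\boldsymbol\upsilon^\star_t=(\Delta-\frac{\mathcal V_\Sigma}{\mathcal C_\Sigma}\mathcal C_S,\frac{\mathcal V_\Sigma}{\mathcal C_\Sigma})(t,\mathbf X_t)$. Standing hypotheses (H): Assumption (A) holds, $\boldsymbol\upsilon^\star\in\mathfrak Y$, and $(P^\psi)_{\psi\in(0,\psi_0)}\subset\mathfrak P$ is a candidate asymptotic model family. *)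

(* Defs.v *)
From HB Require Import structures.
From mathcomp Require Import all_boot all_order all_algebra.
From mathcomp Require Import all_classical all_reals all_analysis.
Set Implicit Arguments. Unset Strict Implicit. Unset Printing Implicit Defensive.
Import Order.TTheory GRing.Theory Num.Theory.
Import numFieldNormedType.Exports.
Local Open Scope classical_set_scope.
Local Open Scope ring_scope.

Section Defs.
Variable R : realType.

Definition st := (R * R * R * R)%type.
Definition xS (x : st) : R := x.1.1.1.
Definition xA (x : st) : R := x.1.1.2.
Definition xM (x : st) : R := x.1.2.
Definition xSg (x : st) : R := x.2.

Definition fun_tx := R -> st -> R.

Definition dS (w : fun_tx) : fun_tx :=
  fun t x => derive1 (fun s => w t (s, xA x, xM x, xSg x)) (xS x).
Definition dA (w : fun_tx) : fun_tx :=
  fun t x => derive1 (fun a => w t (xS x, a, xM x, xSg x)) (xA x).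
Definition dSg (w : fun_tx) : fun_tx :=
  fun t x => derive1 (fun sg => w t (xS x, xA x, xM x, sg)) (xSg x).

Definition D0set (T : R) : set (R * st) :=
  [set z | 0 < z.1 < T /\ 0 < xS z.2 /\ 0 < xM z.2 /\ 0 < xSg z.2].
Definition inD0 (T : R) (x : st) : Prop :=
  0 < xS x /\ 0 < xM x /\ 0 < xSg x.

Definition inD (T Slo Shi t : R) (x : st) : Prop :=
  0 < t < T /\ 0 < xS x /\ 0 < xM x /\ Slo <= xSg x <= Shi.

(* L^p_{\mathfrak P}: Borel on D^0 and
   sup_{P in PP} E^P[ \int_0^T |K(t, X_t)|^p dt ]^{1/p} < oo *)
Definition Lp_fam d (Om : measurableType d) (PP : set (probability Om R))
  (X : R -> Om -> st) (T p : R) (K : fun_tx) : Prop :=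
  measurable_fun (D0set T) (fun z : R * st => K z.1 z.2) /\
  let I : set R := `]0, T[%classic in
  exists C : R, forall P, PP P ->
    (\int[P]_w (\int[lebesgue_measure]_(t in I) ((`|K t (X t w)| `^ p)%:E))
      <= C%:E)%E.

Definition zeta_t := (R * R * R * R)%type.
Definition znu (z : zeta_t) : R := z.1.1.1.
Definition zsig (z : zeta_t) : R := z.1.1.2.
Definition zeta (z : zeta_t) : R := z.1.2.
Definition zxi (z : zeta_t) : R := z.2.

Definition zeta0 (Sg : R) : zeta_t := (0, Sg, 0, 0).

Definition zdist (z z' : zeta_t) : R :=
  Num.sqrt ((znu z - znu z') ^+ 2 + (zsig z - zsig z') ^+ 2
            + (zeta z - zeta z') ^+ 2 + (zxi z - zxi z') ^+ 2).

Definition inZ (nulo nuhi siglo sighi etalo etahi xihi : R) (z : zeta_t) : Prop :=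
  nulo <= znu z <= nuhi /\ siglo <= zsig z <= sighi /\
  etalo <= zeta z <= etahi /\ 0 <= zxi z <= xihi.

Definition coef := R -> (R * R * R) -> R.
Definition sam (x : st) : R * R * R := (xS x, xA x, xM x).

Definition H3 (alpha beta gamma : coef) (w : fun_tx) (t : R) (x : st)
  (z : zeta_t) : R :=
  let g := gamma t (sam x) in
  let S := xS x in
  znu z * dSg w t x
  + (alpha t (sam x) + 2^-1 * beta t (sam x) * zsig z ^+ 2) * dA w t x
  + 2^-1 * zsig z ^+ 2 * S ^+ 2 *
      (dS (dS w) t x + 2 * g * dS (dA w) t x + g ^+ 2 * dA (dA w) t x)
  + zsig z * zeta z * S * (dS (dSg w) t x + g * dA (dSg w) t x)
  + 2^-1 * (zeta z ^+ 2 + zxi z) * dSg (dSg w) t x.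

End Defs.

(* Main.v *)
Require Import Defs.
From HB Require Import structures.
From mathcomp Require Import all_boot all_order all_algebra.
From mathcomp Require Import all_classical all_reals all_analysis.
From mathcomp Require Import measurable_realfun.
From mathcomp Require Import ring lra.
Import Order.TTheory GRing.Theory Num.Theory.
Import numFieldNormedType.Exports.
Local Open Scope classical_set_scope.
Local Open Scope ring_scope.

Lemma le_integral_gen d (T : measurableType d) (R : realType)
  (mu : {measure set T -> \bar R}) (D : set T) (f g : T -> \bar R) :
  (forall x, D x -> (0 <= f x)%E) -> (forall x, D x -> (f x <= g x)%E) ->
  (\int[mu]_(x in D) f x <= \int[mu]_(x in D) g x)%E.
Proof.
move=> f0 fg.
have g0 x : D x -> (0 <= g x)%E by move=> Dx; exact: le_trans (f0 _ Dx) (fg _ Dx).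
rewrite !ge0_integralE //.
apply: ge_ereal_sup => _ [h hf <-]; apply: ereal_sup_ubound; exists h => //= x.
apply: le_trans (hf x) _; rewrite /patch; case: ifP => // /[!inE] Dx; exact: fg.
Qed.

Lemma int4 d (T : measurableType d) (R : realType)
  (mu : {measure set T -> \bar R}) (D : set T) (mD : measurable D)
  (g1 g2 g3 g4 : T -> \bar R) :
  (forall x, (0 <= g1 x)%E) -> (forall x, (0 <= g2 x)%E) ->
  (forall x, (0 <= g3 x)%E) -> (forall x, (0 <= g4 x)%E) ->
  measurable_fun D g1 -> measurable_fun D g2 ->
  measurable_fun D g3 -> measurable_fun D g4 ->
  (\int[mu]_(x in D) (g1 x + g2 x + g3 x + g4 x) =
   \int[mu]_(x in D) g1 x + \int[mu]_(x in D) g2 x +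
   \int[mu]_(x in D) g3 x + \int[mu]_(x in D) g4 x)%E.
Proof.
move=> p1 p2 p3 p4 n1 n2 n3 n4.
rewrite ge0_integralD //; last 2 first.
- by move=> x _; rewrite !adde_ge0.
- by apply: emeasurable_funD => //; exact: emeasurable_funD.
rewrite ge0_integralD //; last 2 first.
- by move=> x _; rewrite !adde_ge0.
- exact: emeasurable_funD.
by rewrite ge0_integralD.
Qed.

Section Meas.
Variables (R : realType) (d : measure_display) (Om : measurableType d).
Variables (X : R -> Om -> st R) (T : R).
Hypothesis hXm : measurable_fun setT (fun z : R * Om => X z.1 z.2).

Lemma pre_meas d1 (U : measurableType d1) (g : U -> R) (A : set R) :
  measurable_fun setT g -> measurable A -> measurable (g @^-1` A).
Proof. by move=> mg mA; rewrite -[X in measurable X]setTI; exact: mg. Qed.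

Lemma mE : measurable (D0set T).
Proof.
have -> : D0set T = (fst @^-1` `]0, T[) `&`
   ((@xS R \o snd) @^-1` `]0, +oo[) `&` ((@xM R \o snd) @^-1` `]0, +oo[)
   `&` ((@xSg R \o snd) @^-1` `]0, +oo[).
  apply/seteqP; split => z /=.
    by move=> [h1 [h2 [h3 h4]]]; rewrite /= !in_itv /= !andbT h1 h2 h3 h4.
  by rewrite /= !in_itv /= !andbT => -[[[h1 h2] h3] h4].
have mS : measurable_fun setT (@xS R) := measurableT_comp measurable_fst
  (measurableT_comp measurable_fst measurable_fst).
have mM : measurable_fun setT (@xM R) := measurableT_comp measurable_snd measurable_fst.
have mSg : measurable_fun setT (@xSg R) := measurable_snd.
apply: measurableI; [apply: measurableI; [apply: measurableI|]|];
  apply: pre_meas => //; try exact: measurable_itv; try exact: measurable_fst;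
  exact: measurableT_comp.
Qed.

Definition Hf (f : fun_tx R) (z : R * Om) : R :=
  ((fun y : R * st R => `|f y.1 y.2| `^ 4) \_ (D0set T)) (z.1, X z.1 z.2).

Lemma Hf_ge0 f z : 0 <= Hf f z.
Proof. by rewrite /Hf /patch; case: ifP => // _; exact: powR_ge0. Qed.

Lemma Hf_le f z : Hf f z <= `|f z.1 (X z.1 z.2)| `^ 4.
Proof. by rewrite /Hf /patch; case: ifP => // _; exact: powR_ge0. Qed.

Lemma mHf (f : fun_tx R) : measurable_fun (D0set T) (fun z => f z.1 z.2) ->
  measurable_fun setT (Hf f).
Proof.
move=> mf.
have h1 : measurable_fun setT (fun z : R * Om => (z.1, X z.1 z.2)).
  exact: measurable_fun_pair measurable_fst hXm.
apply: (measurableT_comp _ h1).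
apply/(measurable_restrictT _ mE).
exact: (measurableT_comp (measurable_realfun.measurable_powR _)
  (measurableT_comp (@measurable_realfun.normr_measurable R setT) mf)).
Qed.

Definition Phi (f : fun_tx R) (w : Om) : \bar R :=
  (\int[lebesgue_measure]_(t in `]0%R, T[) (Hf f (t, w))%:E)%E.

Lemma Phi_ge0 f w : (0 <= Phi f w)%E.
Proof. by apply: integral_ge0 => t _; rewrite lee_fin Hf_ge0. Qed.

Lemma mHf_t (f : fun_tx R) (w : Om) : measurable_fun (D0set T) (fun z => f z.1 z.2) ->
  measurable_fun (`]0, T[%classic : set R) (EFin \o (fun t => Hf f (t, w))).
Proof.
move=> mf; apply/measurable_EFinP.
apply: (measurable_funS measurableT) => //.
exact: (measurable_fun_pair1 (f:=Hf f) w (mHf f mf)).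
Qed.

Lemma mPhi (f : fun_tx R) : measurable_fun (D0set T) (fun z => f z.1 z.2) ->
  measurable_fun setT (Phi f).
Proof.
move=> mf.
have -> : Phi f = fubini_G (@lebesgue_measure R) (EFin \o Hf f).
  apply/funext => w; rewrite /Phi integral_mkcond /fubini_G.
  apply: eq_integral => t _; rewrite /patch /=; case: ifPn => // /negP tI.
  rewrite /Hf /patch; case: ifPn => // /[!inE] -[ht _].
  by exfalso; apply: tI; rewrite inE /= in_itv /= ht.
apply: measurable_fun_fubini_tonelli_G.
  by apply/measurable_EFinP; exact: mHf.
by move=> z; rewrite /= lee_fin Hf_ge0.
Qed.

Lemma max_pow (a b p : R) : 0 <= a -> 0 <= b ->
  (Num.max a b) `^ p <= a `^ p + b `^ p.
Proof.
move=> a0 b0; rewrite maxEle; case: ifP => _.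
  by rewrite lerDr powR_ge0.
by rewrite lerDl powR_ge0.
Qed.

Definition Kmax (c : R) (f1 f2 f3 f4 : fun_tx R) : fun_tx R :=
  fun t x => if (t, x) \in D0set T then c * Num.max (Num.max `|f1 t x| `|f2 t x|)
                  (Num.max `|f3 t x| `|f4 t x|) else 0.

Lemma Kmax_pt c f1 f2 f3 f4 t w : 0 <= c ->
  `|Kmax c f1 f2 f3 f4 t (X t w)| `^ 4 <=
  c `^ 4 * (Hf f1 (t, w) + Hf f2 (t, w) + Hf f3 (t, w) + Hf f4 (t, w)).
Proof.
move=> c0; rewrite /Kmax /Hf /patch /=; case: ifP => _; last first.
  by rewrite normr0 powR0 // !addr0 mulr0.
set a1 := `|f1 _ _|; set a2 := `|f2 _ _|; set a3 := `|f3 _ _|; set a4 := `|f4 _ _|.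
have a10 : 0 <= a1 by exact: normr_ge0.
have a20 : 0 <= a2 by exact: normr_ge0.
have a30 : 0 <= a3 by exact: normr_ge0.
have a40 : 0 <= a4 by exact: normr_ge0.
have m12 : 0 <= Num.max a1 a2 by rewrite maxEle; case: ifP.
have m34 : 0 <= Num.max a3 a4 by rewrite maxEle; case: ifP.
have M0 : 0 <= Num.max (Num.max a1 a2) (Num.max a3 a4) by rewrite maxEle; case: ifP.
rewrite (ger0_norm (mulr_ge0 c0 M0)) powRM //.
apply: ler_wpM2l; first exact: powR_ge0.
apply: le_trans (max_pow _ _ 4 m12 m34) _.
rewrite -addrA; apply: lerD; first exact: max_pow.
exact: max_pow.
Qed.

Variable PP : set (probability Om R).

Lemma Phi_int (f : fun_tx R) (P : probability Om R) :
  (\int[P]_w Phi f w <=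
   \int[P]_w \int[lebesgue_measure]_(t in `]0%R, T[) (`|f t (X t w)| `^ 4)%:E)%E.
Proof.
apply: le_integral_gen => w _; first exact: Phi_ge0.
apply: le_integral_gen => t _; first by rewrite lee_fin Hf_ge0.
by rewrite lee_fin; exact: (Hf_le f (t, w)).
Qed.

Lemma Lp_max c f1 f2 f3 f4 : 0 <= c ->
  Lp_fam PP X T 4 f1 -> Lp_fam PP X T 4 f2 -> Lp_fam PP X T 4 f3 ->
  Lp_fam PP X T 4 f4 -> Lp_fam PP X T 4 (Kmax c f1 f2 f3 f4).
Proof.
move=> c0 [m1 [C1 h1]] [m2 [C2 h2]] [m3 [C3 h3]] [m4 [C4 h4]].
split.
  pose G := fun y : R * st R => c * Num.max (Num.max `|f1 y.1 y.2| `|f2 y.1 y.2|)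
                  (Num.max `|f3 y.1 y.2| `|f4 y.1 y.2|).
  have -> : (fun z : R * st R => Kmax c f1 f2 f3 f4 z.1 z.2) = G \_ (D0set T).
    by apply/funext => -[t x].
  apply: (measurable_funS measurableT) => //; apply/(measurable_restrictT _ mE).
  have ma (f : fun_tx R) : measurable_fun (D0set T) (fun z => f z.1 z.2) ->
      measurable_fun (D0set T) (fun z => `|f z.1 z.2|).
    by move=> mf; exact: (measurableT_comp (@normr_measurable R setT) mf).
  apply: measurable_funM; first exact: measurable_cst.
  by apply: measurable_maxr; apply: measurable_maxr; exact: ma.
exists (c `^ 4 * (C1 + C2 + C3 + C4)) => P PP_P.
have mI : measurable (`]0%R, T[%classic : set R) := measurable_itv _.
have c4 : 0 <= c `^ 4 := powR_ge0 _ _.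
have inner w : (\int[lebesgue_measure]_(t in `]0%R, T[)
     (`|Kmax c f1 f2 f3 f4 t (X t w)| `^ 4)%:E <=
   (c `^ 4)%:E * (Phi f1 w + Phi f2 w + Phi f3 w + Phi f4 w))%E.
  have step : (\int[lebesgue_measure]_(t in `]0%R, T[)
     (`|Kmax c f1 f2 f3 f4 t (X t w)| `^ 4)%:E <=
     \int[lebesgue_measure]_(t in `]0%R, T[) ((c `^ 4)%:E * (Hf f1 (t, w)
      + Hf f2 (t, w) + Hf f3 (t, w) + Hf f4 (t, w))%:E))%E.
    apply: le_integral_gen.
      by move=> t _; rewrite lee_fin powR_ge0.
    by move=> t _; rewrite -EFinM lee_fin; exact: Kmax_pt.
  apply: (le_trans step).
  under eq_integral do rewrite !EFinD.
  rewrite ge0_integralZl_EFin //; last 2 first.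
  - by move=> t _; rewrite !adde_ge0 // lee_fin Hf_ge0.
  - by apply: emeasurable_funD; [apply: emeasurable_funD; [apply: emeasurable_funD|]|];
      exact: mHf_t.
  rewrite /Phi int4 //; try (by move=> t; rewrite lee_fin Hf_ge0); exact: mHf_t.
have step : (\int[P]_w \int[lebesgue_measure]_(t in `]0%R, T[)
        (`|Kmax c f1 f2 f3 f4 t (X t w)| `^ 4)%:E <=
   \int[P]_w ((c `^ 4)%:E * (Phi f1 w + Phi f2 w + Phi f3 w + Phi f4 w)))%E.
  apply: le_integral_gen => w _; last exact: inner.
  by apply: integral_ge0 => t _; rewrite lee_fin powR_ge0.
apply: (le_trans step).
rewrite ge0_integralZl_EFin //; last 2 first.
- by move=> w _; apply: adde_ge0; [apply: adde_ge0; [apply: adde_ge0|]|]; exact: Phi_ge0.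
- by apply: emeasurable_funD; [apply: emeasurable_funD; [apply: emeasurable_funD|]|];
    exact: mPhi.
rewrite int4 //; try (by move=> w; exact: Phi_ge0); try exact: mPhi.
rewrite EFinM lee_wpmul2l ?lee_fin // !EFinD.
by do ! apply: leeD; apply: le_trans (Phi_int _ _) _; auto.
Qed.

End Meas.

Lemma alg (R : realFieldType) (nu sg e xi Sg a1 a3 a4 a5 M sighi Shi d : R) :
  0 < sg -> sg <= sighi -> 0 < Sg -> Sg <= Shi -> 0 <= xi ->
  `|a1| <= M -> `|a3| <= M -> `|a4| <= M -> `|a5| <= M ->
  `|nu| <= d -> `|sg - Sg| <= d -> `|e| <= d -> `|xi| <= d ->
  `|nu * a1 + 2^-1 * (sg ^+ 2 - Sg ^+ 2) * a3 + sg * e * a4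
     + 2^-1 * (e ^+ 2 + xi) * a5|
  <= (2 + 2 * sighi + Shi) * M * d * Num.max 1 d.
Proof.
move=> sg0 sgh Sg0 Sgh xi0 h1 h3 h4 h5 hnu hD he hxi.
have d0 : 0 <= d := le_trans (normr_ge0 _) hnu.
have M0 : 0 <= M := le_trans (normr_ge0 _) h1.
set mx := Num.max 1 d.
have dmx : d <= d * mx by rewrite ler_peMr // le_max lexx.
have d2mx : d ^+ 2 <= d * mx by rewrite expr2 ler_wpM2l // le_max lexx orbT.
set Y := d * mx in dmx d2mx *.
have -> : (2 + 2 * sighi + Shi) * M * d * mx = (2 + 2 * sighi + Shi) * (Y * M).
  by rewrite /Y; ring.
have Y0 : 0 <= Y := le_trans d0 dmx.
clearbody Y.
have h2 : `|2^-1 : R| = 2^-1 by rewrite ger0_norm // invr_ge0 ler0n.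
have T1 : `|nu * a1| <= Y * M.
  by rewrite normrM; apply: ler_pM => //; exact: le_trans hnu dmx.
have T3 : `|2^-1 * (sg ^+ 2 - Sg ^+ 2) * a3| <= 2^-1 * (sighi + Shi) * (Y * M).
  have -> : sg ^+ 2 - Sg ^+ 2 = (sg - Sg) * (sg + Sg) by ring.
  rewrite !normrM (ger0_norm (ltW (addr_gt0 sg0 Sg0))) h2.
  rewrite -!mulrA ler_wpM2l ?invr_ge0 ?ler0n //.
  have -> : (sighi + Shi) * (Y * M) = (Y * (sighi + Shi)) * M by ring.
  rewrite mulrA; apply: ler_pM => //.
    by rewrite mulr_ge0 // ltW // addr_gt0.
  apply: ler_pM => //; [exact: ltW (addr_gt0 sg0 Sg0)|exact: le_trans hD dmx|exact: lerD].
have T4 : `|sg * e * a4| <= sighi * (Y * M).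
  rewrite !normrM (gtr0_norm sg0) mulrA; apply: ler_pM => //.
    by rewrite mulr_ge0 // ltW.
  by apply: ler_pM => //; [exact: ltW|exact: le_trans he dmx].
have T5 : `|2^-1 * (e ^+ 2 + xi) * a5| <= Y * M.
  rewrite !normrM h2 (ger0_norm (addr_ge0 (sqr_ge0 e) xi0)).
  apply: ler_pM => //; first by rewrite mulr_ge0 ?invr_ge0 ?ler0n // addr_ge0 // sqr_ge0.
  have e2 : e ^+ 2 <= d ^+ 2.
    by rewrite -(real_normK (num_real e)) !expr2; exact: (ler_pM (normr_ge0 _) (normr_ge0 _) he he).
  have : xi <= d by rewrite -(ger0_norm xi0).
  lra.
apply: le_trans (ler_normD _ _) _.
apply: le_trans (lerD (le_trans (ler_normD _ _) (lerD (ler_normD _ _) (lexx _))) (lexx _)) _.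
have sh0 : 0 <= sighi := ltW (lt_le_trans sg0 sgh).
have Sh0 : 0 <= Shi := ltW (lt_le_trans Sg0 Sgh).
have YM0 : 0 <= Y * M := mulr_ge0 Y0 M0.
have q1 : 0 <= sighi * (Y * M) := mulr_ge0 sh0 YM0.
have q2 : 0 <= Shi * (Y * M) := mulr_ge0 Sh0 YM0.
lra.
Qed.

Lemma gen_diff (R : realType) (nu sg e xi Sg al B g S d1 dA' Dss Dsa Daa Dsg Dag Dgg : R) :
  (nu * d1 + (al + 2^-1 * B * sg ^+ 2) * dA'
   + 2^-1 * sg ^+ 2 * S ^+ 2 * (Dss + 2 * g * Dsa + g ^+ 2 * Daa)
   + sg * e * S * (Dsg + g * Dag) + 2^-1 * (e ^+ 2 + xi) * Dgg)
  - (0 * d1 + (al + 2^-1 * B * Sg ^+ 2) * dA'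
   + 2^-1 * Sg ^+ 2 * S ^+ 2 * (Dss + 2 * g * Dsa + g ^+ 2 * Daa)
   + Sg * 0 * S * (Dsg + g * Dag) + 2^-1 * (0 ^+ 2 + 0) * Dgg)
  = nu * d1 + 2^-1 * (sg ^+ 2 - Sg ^+ 2) * (B * dA' + S ^+ 2 *
      (Dss + 2 * g * Dsa + g ^+ 2 * Daa))
    + sg * e * (S * (Dsg + g * Dag)) + 2^-1 * (e ^+ 2 + xi) * Dgg.
Proof. ring. Qed.

Lemma H3diff (R : realType) (alpha beta gamma : coef R) (w : fun_tx R) t x z :
  H3 alpha beta gamma w t x z - H3 alpha beta gamma w t x (zeta0 (xSg x)) =
  znu z * dSg w t x
  + 2^-1 * (zsig z ^+ 2 - xSg x ^+ 2) * (beta t (sam x) * dA w t x + xS x ^+ 2 *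
           (dS (dS w) t x + 2 * gamma t (sam x) * dS (dA w) t x
            + gamma t (sam x) ^+ 2 * dA (dA w) t x))
  + zsig z * zeta z * (xS x *
           (dS (dSg w) t x + gamma t (sam x) * dA (dSg w) t x))
  + 2^-1 * (zeta z ^+ 2 + zxi z) * dSg (dSg w) t x.
Proof.
rewrite /H3.
have -> : znu (zeta0 (xSg x)) = 0 by [].
have -> : zsig (zeta0 (xSg x)) = xSg x by [].
have -> : zeta (zeta0 (xSg x)) = 0 by [].
have -> : zxi (zeta0 (xSg x)) = 0 by [].
move: (znu z) (zsig z) (zeta z) (zxi z) (xSg x) (alpha t (sam x))
  (beta t (sam x)) (gamma t (sam x)) (xS x) (dSg w t x) (dA w t x)
  (dS (dS w) t x) (dS (dA w) t x) (dA (dA w) t x) (dS (dSg w) t x)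
  (dA (dSg w) t x) (dSg (dSg w) t x) => *.
ring.
Qed.

Lemma sq4 (R : realType) (a b c e : R) :
  let s := Num.sqrt (a ^+ 2 + b ^+ 2 + c ^+ 2 + e ^+ 2) in
  [/\ `|a| <= s, `|b| <= s, `|c| <= s & `|e| <= s].
Proof.
have a0 := sqr_ge0 a; have b0 := sqr_ge0 b; have c0 := sqr_ge0 c; have e0 := sqr_ge0 e.
by split; rewrite -sqrtr_sqr ler_wsqrtr //; lra.
Qed.

Theorem proposition5p10
  (R : realType) (d : measure_display) (Om : measurableType d)
  (PP : set (probability Om R)) (X : R -> Om -> st R)
  (T Sigma0 Slo Shi nulo nuhi siglo sighi etalo etahi xihi : R)
  (alpha beta gamma : coef R) (w : fun_tx R) (Kw : R)
  (* constants *)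
  (hT : 0 < T)
  (hS : 0 < Slo < Sigma0) (hS' : Sigma0 < Shi)
  (hnu : nulo < 0 < nuhi) (hsig : 0 < siglo < Slo) (hsig' : Shi < sighi)
  (heta : etalo < 0 < etahi) (hxi : 0 < xihi)
  (* Borel coefficients *)
  (halpha : measurable_fun setT (fun z : R * (R * R * R) => alpha z.1 z.2))
  (hbeta : measurable_fun setT (fun z : R * (R * R * R) => beta z.1 z.2))
  (hgamma : measurable_fun setT (fun z : R * (R * R * R) => gamma z.1 z.2))
  (* the state process: jointly measurable, a.s. in D^0 on (0,T) *)
  (hXm : measurable_fun setT (fun z : R * Om => X z.1 z.2))
  (hXD : forall P, PP P ->
     {ae P, forall om, forall t, 0 < t < T -> inD0 T (X t om)})
  (* Assumption (A)(e), integrability and bounds on w~ *)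
  (hw0 : forall t x, inD T Slo Shi t x -> 0 <= w t x <= Kw)
  (hw1 : Lp_fam PP X T 4 (dSg w))
  (hw2 : Lp_fam PP X T 4 (fun t x => xS x * (dS w t x + gamma t (sam x) * dA w t x)))
  (hw3 : Lp_fam PP X T 4 (fun t x => beta t (sam x) * dA w t x + xS x ^+ 2 *
           (dS (dS w) t x + 2 * gamma t (sam x) * dS (dA w) t x
            + gamma t (sam x) ^+ 2 * dA (dA w) t x)))
  (hw4 : Lp_fam PP X T 4 (fun t x => xS x *
           (dS (dSg w) t x + gamma t (sam x) * dA (dSg w) t x)))
  (hw5 : Lp_fam PP X T 4 (dSg (dSg w))) :
  exists K3 : fun_tx R, Lp_fam PP X T 4 K3 /\
    forall t x, inD T Slo Shi t x ->
    forall z, inZ nulo nuhi siglo sighi etalo etahi xihi z ->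
      `|H3 alpha beta gamma w t x z - H3 alpha beta gamma w t x (zeta0 (xSg x))|
        <= K3 t x * zdist z (zeta0 (xSg x))
                  * Num.max 1 (zdist z (zeta0 (xSg x))).
Proof.
Proof.
move/andP: hS => [hS1 hS2]; move/andP: hsig => [hs1 hs2].
pose C := 2 + 2 * sighi + Shi.
have C0 : 0 <= C by rewrite /C; lra.
have L := @Lp_max R d Om X T hXm PP C _ _ _ _ C0 hw1 hw3 hw4 hw5.
eexists; split; first exact: L.
move=> t x hD z hz.
rewrite /Kmax.
have hD' := hD; case: hD' => /andP[t0 tT] [xS0 [xM0 /andP[Sg1 Sg2]]].
have -> : ((t, x) \in D0set T) = true.
  apply/mem_set; split; first by rewrite t0 tT.
  by split => //; split => //=; lra.
have E := H3diff R alpha beta gamma w t x z.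
move: (H3 alpha beta gamma w t x z) (H3 alpha beta gamma w t x (zeta0 (xSg x))) E.
move=> h1 h2 ->.
case: hz => /andP[_ _] [/andP[sz1 sz2] [_ /andP[xi0 _]]].
rewrite /zdist.
have -> : znu (zeta0 (xSg x)) = 0 by [].
have -> : zsig (zeta0 (xSg x)) = xSg x by [].
have -> : zeta (zeta0 (xSg x)) = 0 by [].
have -> : zxi (zeta0 (xSg x)) = 0 by [].
rewrite !subr0.
have [q1 q2 q3 q4] := sq4 R (znu z) (zsig z - xSg x) (zeta z) (zxi z).
rewrite /C; apply: alg => //; try lra; by rewrite !le_max lexx ?orbT.
Qed.
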